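(* Under complete randomization, suppose Assumption 1 holds and Assumptions 2 and 3 hold with order $k<T$. Let $\vec z'\in\{A,B\}^T$ and $t\in\{1,\dots,T\}$. Then $\bar Y_t(\vec z')$ is unbiasedly estimable if either (a) the hypothesis of Proposition S2 holds, i.e. ($t\le k$ and some $\vec z\in\mathcal{S}^{\mathrm{obs}}$ has $\vec z_{[1,t]}=\vec z'_{[1,t]}$) or ($t>k$ and some $\vec z\in\mathcal{S}^{\mathrm{obs}}$ has $\vec z_{[t-k+1,t]}=\vec z'_{[t-k+1,t]}$); or (b) $t\ge k$ and there exist $t'\ge k$, $t'\neq t$, and sequences $\vec z_1,\vec z_2,\vec z_3\in\{A,B\}^T$ with $\vec z_{1,[t'-k+1,t']}=\vec z'_{[t-k+1,t]}$ and $\vec z_{2,[t-k+1,t]}=\vec z_{3,[t'-k+1,t']}$, such that each of $\bar Y_{t'}(\vec z_1)$, $\bar Y_t(\vec z_2)$, $\bar Y_{t'}(\vec z_3)$ is unbiasedly estimable.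
   Context: Setup: $N$ units, treatments $A,B$, $T$ periods; sequences $\vec z\in\{A,B\}^T$, $\vec z_{[t_1,t_2]}=z_{t_1}\cdots z_{t_2}$. $\mathcal{S}^{\mathrm{obs}}$ implemented sequences; complete randomization with fixed positive group sizes $N_{\vec z}$; fixed potential outcomes $Y_{it}(\vec z)$; observed $Y_{it}=Y_{it}(\vec Z_i)$; randomness only from assignment. $\bar Y_t(\vec z)=N^{-1}\sum_iY_{it}(\vec z)$, $\widehat Y_t(\vec z)=N_{\vec z}^{-1}\sum_iY_{it}\mathbf1(\vec Z_i=\vec z)$. Assumption 1: $Y_{it}(\vec z)=Y_{it}(\vec z')$ whenever $\vec z_{[1,t]}=\vec z'_{[1,t]}$. Assumption 2 (order $k$): $Y_{it}(\vec z)=Y_{it}(\vec z')$ whenever $\vec z_{[\max(1,t-k+1),t]}=\vec z'_{[\max(1,t-k+1),t]}$; for $t\ge k$ write $Y_{it}(a)$, $a\in\{A,B\}^k$, for the common value over sequences with $\vec z_{[t-k+1,t]}=a$. Assumption 3 (order $k$): for all $a,b\in\{A,B\}^k$ and $t'>t\ge k$, $Y_{it}(a)-Y_{it}(b)=Y_{it'}(a)-Y_{it'}(b)$. A quantity is unbiasedly estimable if there is an estimator $\sum_{s}\sum_{\vec z\in\mathcal{S}^{\mathrm{obs}}}\tilde w_s(\vec z)\widehat Y_s(\vec z)$ with non-random weights whose expectation equals it for every finite population satisfying the assumptions. *)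

(* Defs.v *)
From HB Require Import structures.
From mathcomp Require Import all_boot all_order all_algebra.
Set Implicit Arguments. Unset Strict Implicit. Unset Printing Implicit Defensive.
Import Order.TTheory GRing.Theory Num.Theory.
Local Open Scope ring_scope.

(* Treatments: A is encoded as [true], B as [false].
   A treatment sequence is a T.-tuple bool; periods are numbered 1..T. *)

Definition zat (T : nat) (z : T.-tuple bool) (s : nat) : bool := nth false z s.-1.

Definition segeq (T : nat) (z z' : T.-tuple bool) (t1 t2 : nat) : Prop :=
  forall s : nat, (t1 <= s)%N -> (s <= t2)%N -> zat z s = zat z' s.

(* the window z_[t-k+1, t] as an element of {A,B}^k (meaningful for t >= k) *)
Definition win (T : nat) (k : nat) (z : T.-tuple bool) (t : nat) : k.-tuple bool :=
  [tuple zat z (t - k + 1 + j)%N | j < k].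

(* potential outcomes Y i t z *)
Definition pop (R : Type) (N T : nat) := 'I_N -> nat -> T.-tuple bool -> R.

Definition assumption1 (R : Type) (N T : nat) (Y : pop R N T) : Prop :=
  forall (i : 'I_N) (t : nat) (z z' : T.-tuple bool),
    (1 <= t <= T)%N -> segeq z z' 1 t -> Y i t z = Y i t z'.

Definition assumption2 (R : Type) (N T k : nat) (Y : pop R N T) : Prop :=
  forall (i : 'I_N) (t : nat) (z z' : T.-tuple bool),
    (1 <= t <= T)%N -> segeq z z' (maxn 1 (t - k + 1)) t -> Y i t z = Y i t z'.

(* Y_it(a) - Y_it(b) = Y_it'(a) - Y_it'(b), where Y_it(a) is the common value of
   Y i t z over sequences z whose window ending at t equals a *)
Definition assumption3 (R : zmodType) (N T k : nat) (Y : pop R N T) : Prop :=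
  forall (i : 'I_N) (a b : k.-tuple bool) (t t' : nat)
         (za zb za' zb' : T.-tuple bool),
    (k <= t)%N -> (1 <= t)%N -> (t < t')%N -> (t' <= T)%N ->
    win k za t = a -> win k zb t = b -> win k za' t' = a -> win k zb' t' = b ->
    Y i t za - Y i t zb = Y i t' za' - Y i t' zb'.

Definition assumptions (R : zmodType) (N T k : nat) (Y : pop R N T) : Prop :=
  [/\ assumption1 Y, assumption2 k Y & assumption3 k Y].

Definition Ybar (R : fieldType) (N T : nat) (Y : pop R N T) (t : nat)
  (z : T.-tuple bool) : R :=
  (N%:R)^-1 * \sum_(i < N) Y i t z.

(* assignments Z : units -> sequences; complete randomization: uniform over the
   assignments with exactly n z units on each z in Sobs and none elsewhere *)
Definition valid_assign (N T : nat) (Sobs : {set T.-tuple bool})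
  (n : T.-tuple bool -> nat) (Z : {ffun 'I_N -> T.-tuple bool}) : bool :=
  [forall z : T.-tuple bool,
     #|[set i : 'I_N | Z i == z]| == (if z \in Sobs then n z else 0%N)].

Definition Expect (R : fieldType) (N T : nat) (Sobs : {set T.-tuple bool})
  (n : T.-tuple bool -> nat) (f : {ffun 'I_N -> T.-tuple bool} -> R) : R :=
  (#|[set Z : {ffun 'I_N -> T.-tuple bool} | valid_assign Sobs n Z]|%:R)^-1 *
  \sum_(Z : {ffun 'I_N -> T.-tuple bool} | valid_assign Sobs n Z) f Z.

Definition Yhat (R : fieldType) (N T : nat) (n : T.-tuple bool -> nat)
  (Y : pop R N T) (Z : {ffun 'I_N -> T.-tuple bool}) (s : nat)
  (z : T.-tuple bool) : R :=
  ((n z)%:R)^-1 * \sum_(i < N) Y i s (Z i) * (Z i == z)%:R.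

Definition estimator (R : fieldType) (N T : nat) (Sobs : {set T.-tuple bool})
  (n : T.-tuple bool -> nat) (w : nat -> T.-tuple bool -> R) (Y : pop R N T)
  (Z : {ffun 'I_N -> T.-tuple bool}) : R :=
  \sum_(1 <= s < T.+1) \sum_(z in Sobs) w s z * Yhat n Y Z s z.

Definition unbiasedly_estimable (R : fieldType) (N T k : nat)
  (Sobs : {set T.-tuple bool}) (n : T.-tuple bool -> nat)
  (theta : pop R N T -> R) : Prop :=
  exists w : nat -> T.-tuple bool -> R,
    forall Y : pop R N T, assumptions k Y ->
      Expect Sobs n (estimator Sobs n w Y) = theta Y.

(* Main.v *)
Require Import Defs.
From HB Require Import structures.
From mathcomp Require Import all_boot all_order all_algebra.
From mathcomp Require Import fingroup perm.
From mathcomp Require Import ring lra.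
Import Order.TTheory GRing.Theory Num.Theory.
Local Open Scope ring_scope.

Lemma card_count (N : nat) (X : eqType) (Z : 'I_N -> X) (z : X) :
  #|[set i | Z i == z]| = count (pred1 z) (map Z (enum 'I_N)).
Proof. rewrite count_map cardsE cardE -size_filter.
rewrite {1}/enum_mem enumT; congr size; exact: eq_filter.
Qed.

Lemma valid_exists (N T : nat) (Sobs : {set T.-tuple bool}) (n : T.-tuple bool -> nat)
  (n_sum : (\sum_(z in Sobs) n z)%N = N) :
  exists Z : {ffun 'I_N -> T.-tuple bool}, valid_assign Sobs n Z.
Proof.
set x0 : T.-tuple bool := [tuple false | _ < T].
set s := flatten [seq nseq (n y) y | y <- enum Sobs].
have hs : size s = N.
  rewrite size_flatten /shape -map_comp.
  rewrite (eq_map (g := n)); last by move=> y /=; rewrite size_nseq.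
  by rewrite -n_sum -big_enum /= sumnE big_map.
exists [ffun i : 'I_N => nth x0 s i].
apply/forallP => z; apply/eqP.
rewrite card_count.
have -> : [seq [ffun i : 'I_N => nth x0 s i] i | i <- enum 'I_N] = s.
  rewrite (eq_map (g := fun i : 'I_N => nth x0 s i)); last by move=> i; rewrite ffunE.
  by rewrite -{2}(mkseq_nth x0 s) hs /mkseq -val_enum_ord -map_comp.
rewrite /s count_flatten -map_comp sumnE big_map big_enum /=.
under eq_bigr => y _ do rewrite count_nseq.
case: ifP => zS.
  rewrite (bigD1 z) //= eqxx mul1n big1 ?addn0 // => y /andP [_ /negbTE].
  by rewrite eq_sym => ->.
rewrite big1 // => y yS.
have : y != z by apply: contraTneq yS => ->; rewrite zS.
by rewrite /= eq_sym => /negbTE ->.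
Qed.

Section U.
Variables (R : realFieldType) (N T : nat) (Sobs : {set T.-tuple bool})
  (n : T.-tuple bool -> nat).

Definition cc (z : T.-tuple bool) (i : 'I_N) : R :=
  \sum_(Z : {ffun 'I_N -> T.-tuple bool} | valid_assign Sobs n Z) (Z i == z)%:R.

Lemma valid_perm (i j : 'I_N) (Z : {ffun 'I_N -> T.-tuple bool}) :
  valid_assign Sobs n [ffun x => Z (tperm i j x)] = valid_assign Sobs n Z.
Proof.
rewrite /valid_assign; apply: eq_forallb => z.
suff -> : [set x | [ffun x0 => Z (tperm i j x0)] x == z] =
          tperm i j @^-1: [set x | Z x == z] by rewrite card_preimset //; exact: perm_inj.
by apply/setP => x; rewrite !inE ffunE.
Qed.

Lemma cc_eq z (i j : 'I_N) : cc z i = cc z j.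
Proof.
rewrite /cc (reindex_inj (h := fun Z : {ffun 'I_N -> T.-tuple bool} => [ffun x => Z (tperm i j x)])).
  apply: eq_big => Z; first by rewrite valid_perm.
  by move=> _; rewrite ffunE tpermL.
move=> Z1 Z2 /ffunP H; apply/ffunP => x.
by have := H (tperm i j x); rewrite !ffunE tpermK.
Qed.

Lemma cc_sum z : z \in Sobs ->
  \sum_(i < N) cc z i = #|[set Z : {ffun 'I_N -> T.-tuple bool} | valid_assign Sobs n Z]|%:R * (n z)%:R.
Proof.
move=> zS; rewrite /cc exchange_big /=.
transitivity (\sum_(Z : {ffun 'I_N -> T.-tuple bool} | valid_assign Sobs n Z) ((n z)%:R : R)).
  apply: eq_bigr; move=> Z VZ.
  move/forallP: VZ => /(_ z) /eqP; rewrite zS => <-.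
  rewrite -natr_sum; congr (_%:R).
  rewrite -sum1_card [RHS]big_mkcond /=; apply: eq_bigr => i _; rewrite inE; by case: (Z i == z).
by rewrite sumr_const cardsE mulr_natl.
Qed.

Lemma Expect_Yhat (n_pos : forall z, z \in Sobs -> (0 < n z)%N)
  (n_sum : (\sum_(z in Sobs) n z)%N = N) (Y : pop R N T) s z :
  z \in Sobs -> Expect Sobs n (fun Z => Yhat n Y Z s z) = Ybar Y s z.
Proof.
move=> zS.
have nz := n_pos z zS.
have nzN : (n z <= N)%N by rewrite -n_sum (bigD1 z) //= leq_addr.
have N0 : (0 < N)%N by apply: leq_trans nzN.
have [Z0 VZ0] := @valid_exists _ _ _ _ n_sum.
set V := #|[set Z : {ffun 'I_N -> T.-tuple bool} | valid_assign Sobs n Z]|.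
have V0 : (0 < V)%N by apply/card_gt0P; exists Z0; rewrite inE.
set i0 : 'I_N := Ordinal N0.
have hc : forall i, cc z i = V%:R * (n z)%:R / N%:R.
  move=> i; have := cc_sum z zS.
  rewrite (eq_bigr (fun _ => cc z i0)); last by move=> j _; apply: cc_eq.
  rewrite sumr_const card_ord => <-; rewrite (cc_eq z i i0) -[_ *+ N]mulr_natr mulfK //.
  by rewrite pnatr_eq0 -lt0n.
rewrite /Expect /Yhat /Ybar.
transitivity (V%:R^-1 * ((n z)%:R^-1 * \sum_(i < N) Y i s z * cc z i)).
  congr (_ * _); rewrite -mulr_sumr; congr (_ * _).
  rewrite exchange_big /=; apply: eq_bigr => i _.
  rewrite /cc mulr_sumr; apply: eq_bigr => Z _.
  by case: eqP => [->|] //; rewrite !mulr0.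
under eq_bigr => i _ do rewrite hc.
rewrite -mulr_suml.
have hV : (V%:R : R) != 0 by rewrite pnatr_eq0 -lt0n.
have hn : ((n z)%:R : R) != 0 by rewrite pnatr_eq0 -lt0n.
have hN : (N%:R : R) != 0 by rewrite pnatr_eq0 -lt0n.
field; by rewrite hV hn hN.
Qed.
End U.

Lemma Expect_lin (R : realFieldType) (N T : nat) (Sobs : {set T.-tuple bool})
  (n : T.-tuple bool -> nat) (f g h : {ffun 'I_N -> T.-tuple bool} -> R) :
  Expect Sobs n (fun Z => f Z + g Z - h Z) =
  Expect Sobs n f + Expect Sobs n g - Expect Sobs n h.
Proof. by rewrite /Expect sumrB big_split /= mulrBr mulrDr. Qed.

Lemma Expect_ext (R : realFieldType) (N T : nat) (Sobs : {set T.-tuple bool})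
  (n : T.-tuple bool -> nat) (f g : {ffun 'I_N -> T.-tuple bool} -> R) :
  (forall Z, f Z = g Z) -> Expect Sobs n f = Expect Sobs n g.
Proof. by move=> H; rewrite /Expect; congr (_ * _); apply: eq_bigr => Z _. Qed.

Lemma est_lin (R : realFieldType) (N T : nat) (Sobs : {set T.-tuple bool})
  (n : T.-tuple bool -> nat) (w1 w2 w3 : nat -> T.-tuple bool -> R) (Y : pop R N T) (Z : {ffun 'I_N -> T.-tuple bool}) :
  estimator Sobs n (fun s x => w1 s x + w2 s x - w3 s x) Y Z =
  estimator Sobs n w1 Y Z + estimator Sobs n w2 Y Z - estimator Sobs n w3 Y Z.
Proof.
rewrite /estimator.
under eq_bigr => s _ do under eq_bigr => x _ do rewrite mulrBl mulrDl.
under eq_bigr => s _ do rewrite sumrB big_split.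
by rewrite sumrB big_split.
Qed.

Lemma est_single (R : realFieldType) (N T : nat) (Sobs : {set T.-tuple bool})
  (n : T.-tuple bool -> nat) (Y : pop R N T) (Z : {ffun 'I_N -> T.-tuple bool}) t z :
  (1 <= t <= T)%N -> z \in Sobs ->
  estimator Sobs n (fun s x => ((s == t) && (x == z))%:R) Y Z = Yhat n Y Z t z.
Proof.
move=> ht zS; rewrite /estimator.
transitivity (\sum_(1 <= s < T.+1) (if s == t then Yhat n Y Z s z else 0)).
  apply: eq_bigr => s _.
  case: (s == t) => /=.
    rewrite (bigD1 z) //= eqxx mul1r big1 ?addr0 // => x /andP [_ /negbTE ->].
    by rewrite mul0r.
  by rewrite big1 // => x _; rewrite mul0r.
by rewrite -big_mkcond big_nat1_eq ltnS ht.
Qed.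

Theorem propositionS3 (R : realFieldType) (N T k : nat)
  (Sobs : {set T.-tuple bool}) (n : T.-tuple bool -> nat)
  (n_pos : forall z, z \in Sobs -> (0 < n z)%N)
  (n_sum : (\sum_(z in Sobs) n z)%N = N)
  (k_pos : (0 < k)%N) (k_lt_T : (k < T)%N)
  (z' : T.-tuple bool) (t : nat) (ht : (1 <= t <= T)%N) :
  ( (* (a): hypothesis of Proposition S2 *)
    ((t <= k)%N /\ exists2 z, z \in Sobs & segeq z z' 1 t) \/
    ((k < t)%N /\ exists2 z, z \in Sobs & segeq z z' (t - k + 1) t) \/
    (* (b) *)
    ((k <= t)%N /\
     exists t' : nat, [/\ (k <= t')%N, (t' <= T)%N & t' <> t] /\
     exists z1 z2 z3 : T.-tuple bool,
       [/\ win k z1 t' = win k z' t, win k z2 t = win k z3 t',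
           unbiasedly_estimable k Sobs n (fun Y : pop R N T => Ybar Y t' z1),
           unbiasedly_estimable k Sobs n (fun Y : pop R N T => Ybar Y t z2) &
           unbiasedly_estimable k Sobs n (fun Y : pop R N T => Ybar Y t' z3)]) ) ->
  unbiasedly_estimable k Sobs n (fun Y : pop R N T => Ybar Y t z').
Proof.
case=> [[htk [z zS hz]] | [[htk [z zS hz]] | [hkt [t' [[hkt' ht'T htt'] [z1 [z2 [z3 [e1 e2 [w1 H1] [w2 H2] [w3 H3]]]]]]]]]].
- exists (fun s x => ((s == t) && (x == z))%:R) => Y [A1 A2 A3].
  rewrite (@Expect_ext _ _ _ _ _ _ (fun Z => Yhat n Y Z t z)); last by move=> Z; apply: est_single.
  rewrite Expect_Yhat //; rewrite /Ybar; congr (_ * _); apply: eq_bigr => i _.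
  exact: A1.
- exists (fun s x => ((s == t) && (x == z))%:R) => Y [A1 A2 A3].
  rewrite (@Expect_ext _ _ _ _ _ _ (fun Z => Yhat n Y Z t z)); last by move=> Z; apply: est_single.
  rewrite Expect_Yhat //; rewrite /Ybar; congr (_ * _); apply: eq_bigr => i _.
  apply: A2 => //.
  have -> : maxn 1 (t - k + 1) = (t - k + 1)%N by apply/maxn_idPr; rewrite addn1.
  exact: hz.
- exists (fun s x => w1 s x + w2 s x - w3 s x) => Y HY.
  have [A1 A2 A3] := HY.
  rewrite (@Expect_ext _ _ _ _ _ _ _ (fun Z => est_lin _ _ _ _ _ w1 w2 w3 Y Z)).
  rewrite Expect_lin H1 // H2 // H3 // /Ybar -mulrDr -mulrBr; congr (_ * _).
  rewrite -big_split -sumrB /=; apply: eq_bigr => i _.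
  have ht1 : (1 <= t)%N by case/andP: ht.
  have htT : (t <= T)%N by case/andP: ht.
  case: (ltngtP t t') => [lt|lt|eq]; last by exfalso; apply: htt'.
  + have := A3 i (win k z' t) (win k z2 t) t t' z' z2 z1 z3 hkt ht1 lt ht'T
             erefl erefl e1 (esym e2).
    move=> H; lra.
  + have := A3 i (win k z1 t') (win k z3 t') t' t z1 z3 z' z2 hkt'
             (leq_trans k_pos hkt') lt htT erefl erefl (esym e1) e2.
    move=> H; lra.
Qed.
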